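(* Let $\sigma:[0,\infty)\to[0,\infty)$ be nondecreasing with $\lim_{t\to\infty}\sigma(t)=\infty$. If $\gamma(\sigma)>0$, then $\gamma(\sigma)+1=\gamma((\sigma^{\iota})_{\star})$.
   Context: $\sigma^{\iota}(t):=\sigma(1/t)$ for $t>0$. For $h:(0,\infty)\to[0,\infty)$ nonincreasing with $\lim_{t\to0}h(t)=\infty$, $h_{\star}(t):=\inf_{s>0}\{h(s)+ts\}$ for $t\ge0$. For a nondecreasing function $\sigma$ tending to $\infty$ and $\gamma>0$, $(P_{\sigma,\gamma})$ holds if there is $K>1$ with $\limsup_{t\to\infty}\sigma(K^{\gamma}t)/\sigma(t)<K$; $\gamma(\sigma):=\sup\{\gamma>0:(P_{\sigma,\gamma})\text{ holds}\}$, and $:=0$ if none holds. *)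

(* Defs.v *)
From HB Require Import structures.
From mathcomp Require Import all_boot all_order all_algebra.
From mathcomp Require Import all_classical all_reals all_analysis.
Set Implicit Arguments. Unset Strict Implicit. Unset Printing Implicit Defensive.
Import Order.TTheory GRing.Theory Num.Theory.
Import numFieldNormedType.Exports.
Local Open Scope classical_set_scope.
Local Open Scope ring_scope.

Section defs.
Variable R : realType.

Definition iota_fn (sigma : R -> R) : R -> R := fun t => sigma (1 / t).

Definition lstar (h : R -> R) : R -> R :=
  fun t => inf [set h s + t * s | s in `]0, +oo[].

Definition limsup_pinfty (g : R -> R) : \bar R :=
  limf_esup (fun t => (g t)%:E) (+oo : set_system R).

Definition P_prop (sigma : R -> R) (gam : R) : Prop :=
  exists K : R, 1 < K /\
    (limsup_pinfty (fun t => (sigma (K `^ gam * t) / sigma t)%R) < K%:E)%E.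

Definition gamma_idx (sigma : R -> R) : \bar R :=
  if `[< exists gam : R, 0 < gam /\ P_prop sigma gam >] then
    ereal_sup [set gam%:E | gam in [set gam : R | 0 < gam /\ P_prop sigma gam]]
  else 0%E.
End defs.

(* Main.v *)
Require Import Defs.
From HB Require Import structures.
From mathcomp Require Import all_boot all_order all_algebra.
From mathcomp Require Import all_classical all_reals all_analysis.
From mathcomp Require Import ring lra.
Import Order.TTheory GRing.Theory Num.Theory.
Import numFieldNormedType.Exports.
Import Num.Def.
Import archimedean.Num.Theory.
Local Open Scope classical_set_scope.
Local Open Scope ring_scope.

Section aux.
Variable R : realType.
Implicit Types (g : R -> R).

Lemma limsup_lt g (K : R) : (limsup_pinfty g < K%:E)%E ->
  exists c T, c < K /\ forall t, T < t -> g t <= c.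
Proof.
rewrite /limsup_pinfty /limf_esup => /ereal_inf_lt [y [V [M [Mr MV]] <-]] yK.
have ub : forall t, M < t -> ((g t)%:E <= ereal_sup ((fun t => (g t)%:E) @` V))%E.
  by move=> t /MV Vt; apply: ereal_sup_ubound; exists t.
move: yK ub; set s := ereal_sup _ => sK ub.
case: s sK ub => [r| |] sK ub.
- exists ((r + K) / 2), M; split; first by rewrite lte_fin in sK; lra.
  move=> t /ub; rewrite lee_fin => gr; rewrite lte_fin in sK; lra.
- by [].
- exists (K - 1), M; split; first lra.
  by move=> t /ub.
Qed.

Lemma limsup_le g (q T : R) : (forall t, T < t -> g t <= q) ->
  (limsup_pinfty g <= q%:E)%E.
Proof.
move=> H; rewrite /limsup_pinfty /limf_esup.
apply: (@le_trans _ _ (ereal_sup ((fun t => (g t)%:E) @` [set x | T < x]))).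
  apply: ereal_inf_lbound; exists [set x | T < x] => //.
  by exists T; split; first exact: num_real.
apply: ge_ereal_sup => _ [t + <-] => /H.
by rewrite lee_fin.
Qed.
End aux.

Section hlemmas.
Variable R : realType.
Variable sigma : R -> R.
Hypothesis s0 : forall t, 0 <= t -> 0 <= sigma t.
Hypothesis smono : forall s t, 0 <= s -> s <= t -> sigma s <= sigma t.
Let h := lstar (iota_fn sigma).

Lemma h_lb0 t : 0 <= t ->
  has_lbound [set iota_fn sigma s + t * s | s in `]0, +oo[%classic].
Proof.
move=> t0; exists 0 => _ [s /= + <-]; rewrite in_itv /= andbT => s_gt0.
rewrite /iota_fn; apply: addr_ge0; last exact: mulr_ge0 (ltW _).
by apply: s0; rewrite divr_ge0 // ltW.
Qed.

Lemma h_ub t u : 0 <= t -> 0 < u -> h t <= sigma u + t / u.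
Proof.
move=> t0 u0; rewrite /h /lstar; apply: ge_inf; first exact: h_lb0.
exists (1 / u); first by rewrite /= in_itv /= andbT divr_gt0.
by rewrite /iota_fn !div1r invrK mulrC.
Qed.

Lemma h_glb t m : 0 <= t -> (forall u, 0 < u -> m <= sigma u + t / u) -> m <= h t.
Proof.
move=> t0 H; rewrite /h /lstar; apply: lb_le_inf.
  by exists (sigma (1/1) + t * 1), 1; rewrite //= in_itv /= andbT ltr01.
move=> _ [s /= + <-]; rewrite in_itv /= andbT => s_gt0.
have := H (1 / s); rewrite divr_gt0 // => /(_ isT).
by rewrite /iota_fn div1r invrK.
Qed.

Lemma h_min t y : 0 <= t -> 0 < y -> Num.min (sigma y) (t / y) <= h t.
Proof.
move=> t0 y0; apply: h_glb => // u u0.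
have [uy|yu] := leP y u.
  rewrite ge_min; apply/orP; left.
  rewrite -[X in X <= _]addr0; apply: lerD; first exact: smono (ltW _) _.
  by rewrite divr_ge0 // ltW.
rewrite ge_min; apply/orP; right.
rewrite -[X in X <= _]add0r; apply: lerD; first by apply: s0; exact: ltW.
by apply: ler_wpM2l => //; rewrite lef_pV2 ?posrE // ltW.
Qed.

Lemma h_mono t1 t2 : 0 <= t1 -> t1 <= t2 -> h t1 <= h t2.
Proof.
move=> t10 t12; apply: h_glb; first exact: le_trans t12.
move=> u u0; apply: (le_trans (h_ub _ _ t10 u0)).
by rewrite lerD2l ler_pM2r // invr_gt0.
Qed.

Lemma h_ge0 t : 0 <= t -> 0 <= h t.
Proof.
move=> t0; apply: h_glb => // u u0; apply: addr_ge0; first by apply: s0; exact: ltW.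
by rewrite divr_ge0 // ltW.
Qed.

End hlemmas.

Section arith.
Variable R : realType.

Lemma bern (r : R) m : 0 <= r -> 1 + m%:R * r <= (1 + r) ^+ m.
Proof.
move=> r0; elim: m => [|m IH]; first by rewrite mul0r addr0 expr0.
rewrite exprS; apply: (@le_trans _ _ ((1 + r) * (1 + m%:R * r))); last first.
  by apply: ler_wpM2l => //; rewrite addr_ge0.
rewrite mulrDl mul1r -natr1; have : 0 <= r * (m%:R * r) by rewrite !mulr_ge0.
nra.
Qed.

Lemma pow_beat (c K B : R) : 0 < c -> c < K -> exists m : nat, B * c ^+ m < K ^+ m.
Proof.
move=> c0 cK; set r := K / c - 1.
have r0 : 0 < r by rewrite /r subr_gt0 ltr_pdivlMr // mul1r.
exists (truncn (`|B| / r)).+1.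
set m := (truncn _).+1.
have hm : `|B| / r < m%:R by exact: truncnS_gt.
have hB : B < (K / c) ^+ m.
  apply: (@lt_le_trans _ _ (1 + m%:R * r)); last first.
    by have := @bern r m (ltW r0); rewrite [1 + r]addrC /r subrK.
  rewrite ltr_pdivrMr // in hm; have := ler_norm B; nra.
have -> : K ^+ m = (K / c) ^+ m * c ^+ m by rewrite -exprMn divfK // gt_eqF.
by rewrite ltr_pM2r // exprn_gt0.
Qed.
End arith.

Section partb.
Variable R : realType.
Variable sigma : R -> R.
Hypothesis s0 : forall t, 0 <= t -> 0 <= sigma t.
Hypothesis smono : forall s t, 0 <= s -> s <= t -> sigma s <= sigma t.
Hypothesis sinf : sigma x @[x --> +oo] --> +oo.
Let h := lstar (iota_fn sigma).

Lemma sig_ev : exists M, 0 < M /\ forall x, M <= x -> 1 <= sigma x.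
Proof.
have [M [_ HM]] : \forall x \near +oo, 1 <= sigma x by move/cvgryPge: sinf; apply.
exists (`|M| + 1); split; first by rewrite ltr_pwDr // normr_ge0.
move=> x Mx; apply: HM; have := ler_norm M; lra.
Qed.

Lemma h_pos t : 0 < t -> 0 < h t.
Proof.
move=> t0; have [M [M0 HM]] := sig_ev.
apply: (@lt_le_trans _ _ (Num.min (sigma M) (t / M))); last exact: h_min (ltW t0) M0.
rewrite lt_min; apply/andP; split; first by apply: (lt_le_trans ltr01); exact: HM.
by rewrite divr_gt0.
Qed.


Lemma partb del : 1 < del -> P_prop h del -> P_prop sigma (del - 1).
Proof.
move=> del1 [K [K1 /limsup_lt [c [T [cK HT]]]]].
set a := K `^ del.
have K0 : 0 < K by apply: lt_trans ltr01 K1.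
set c1 := Num.max c 1.
have c1K : c1 < K by rewrite gt_max cK K1.
have c11 : 1 <= c1 by rewrite le_max lexx orbT.
set T1 := `|T| + 1.
have T10 : 0 < T1 by rewrite ltr_pwDr // normr_ge0.
have a1 : 1 <= a.
  by rewrite /a -(powRr0 K); apply: ler_powR; [exact: ltW | lra].
have step : forall t, T1 < t -> h (a * t) <= c1 * h t.
  move=> t Tt; have tT : T < t by have := ler_norm T; rewrite /T1 in Tt; lra.
  have t0 : 0 < t by apply: lt_trans T10 Tt.
  have := HT t tT; rewrite ler_pdivrMr ?h_pos //.
  move=> H; apply: (le_trans H); apply: ler_wpM2r; last by rewrite le_max lexx.
  exact: h_ge0 s0 _ (ltW t0).
have iter : forall j t, T1 < t -> h (a ^+ j * t) <= c1 ^+ j * h t.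
  elim=> [|j IH] t Tt; first by rewrite !expr0 !mul1r.
  rewrite !exprS -mulrA; apply: (le_trans (step _ _)).
    by apply: (lt_le_trans Tt); rewrite ler_peMl // ?exprn_ege1 // ltW // (lt_trans T10).
  rewrite -mulrA ler_pM2l ?(lt_le_trans ltr01) //; exact: IH.
have [m hm] := @pow_beat _ c1 K 2 (lt_le_trans ltr01 c11) c1K.
set K' := K ^+ m.
set Q := (2 * c1 ^+ m + K') / 2.
have hQ1 : 2 * c1 ^+ m < Q by rewrite /Q /K'; lra.
have hQ2 : Q < K' by rewrite /Q /K'; lra.
have c1m0 : 0 < c1 ^+ m by rewrite exprn_gt0 // (lt_le_trans ltr01).
have K'1 : 1 < K'.
  apply: (le_lt_trans _ hm); have : 1 <= c1 ^+ m by rewrite exprn_ege1.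
  lra.
set lam := K' `^ (del - 1).
have lam0 : 0 < lam by rewrite powR_gt0 // (lt_trans ltr01).
have lamK : lam * K' = a ^+ m.
  rewrite /lam -[X in _ * X]powRr1 ?(le_trans ler01) ?ltW // -powRD; last first.
    by apply/implyP => _; rewrite gt_eqF // (lt_trans ltr01).
  rewrite subrK /K' -powR_mulrn ?ltW // -powRrM mulrC powRrM powR_mulrn //.
  by rewrite /a powR_ge0.
have [M [M0 HM]] := sig_ev.
exists K'; split => //.
apply: (@le_lt_trans _ _ Q%:E); last by rewrite lte_fin.
apply: (@limsup_le _ _ Q (Num.max M T1)) => x.
rewrite gt_max => /andP [Mx Tx].
have sx1 : 1 <= sigma x by apply: HM; exact: ltW.
have sx0 : 0 < sigma x by apply: lt_le_trans ltr01 sx1.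
have x0 : 0 < x by apply: lt_trans M0 Mx.
rewrite ler_pdivrMr //; rewrite -/lam.
rewrite leNgt; apply/negP => hlt.
set s := x * sigma x.
have sT : T1 < s by rewrite /s; apply: (lt_le_trans Tx); rewrite ler_peMr // ltW.
have lx0 : 0 < lam * x by rewrite mulr_gt0.
set t := lam * x * (Q * sigma x).
have Q0 : 0 < Q by apply: (lt_trans _ hQ1); rewrite mulr_gt0.
have t0 : 0 <= t by apply/ltW/mulr_gt0 => //; exact: mulr_gt0.
have h1 : Q * sigma x <= h t.
  have e : t / (lam * x) = Q * sigma x by rewrite /t mulrC mulKf ?gt_eqF.
  have := @h_min _ sigma s0 smono t _ t0 lx0; rewrite e.
  by move=> H; apply: le_trans H; rewrite le_min (ltW hlt) lexx.
have h2 : h t <= c1 ^+ m * h s.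
  apply: (le_trans (@h_mono _ sigma s0 t (a ^+ m * s) t0 _)).
    rewrite -lamK /t /s; rewrite -!mulrA ler_pM2l //.
    have := hQ2; rewrite /Q => hq; have := mulr_gt0 x0 sx0; nra.
  exact: iter.
have h3 : h s <= 2 * sigma x.
  have e : s / x = sigma x by rewrite /s mulrC mulKf ?gt_eqF.
  apply: (le_trans (@h_ub _ sigma s0 s x _ x0)); first by rewrite /s mulr_ge0 // ltW.
  rewrite e; lra.
have : Q * sigma x <= 2 * c1 ^+ m * sigma x.
  apply: (le_trans h1 (le_trans h2 _)); move: h3 c1m0; nra.
rewrite ler_pM2r //; lra.
Qed.
End partb.

Section parta.
Variable R : realType.
Variable sigma : R -> R.
Hypothesis s0 : forall t, 0 <= t -> 0 <= sigma t.
Hypothesis smono : forall s t, 0 <= s -> s <= t -> sigma s <= sigma t.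
Hypothesis sinf : sigma x @[x --> +oo] --> +oo.
Let h := lstar (iota_fn sigma).

Lemma parta gam : 0 < gam -> P_prop sigma gam -> P_prop h (gam + 1).
Proof.
move=> gam0 [K [K1 /limsup_lt [c [T [cK HT]]]]].
set b := K `^ gam.
have K0 : 0 < K by apply: lt_trans ltr01 K1.
set c1 := Num.max c 1.
have c1K : c1 < K by rewrite gt_max cK K1.
have c11 : 1 <= c1 by rewrite le_max lexx orbT.
have c10 : 0 < c1 by apply: lt_le_trans ltr01 c11.
have [M [M0 HM]] := @sig_ev _ sigma sinf.
set T1 := Num.max (`|T| + 1) M.
have T10 : 0 < T1 by rewrite lt_max M0 orbT.
have b1 : 1 < b.
  have : 1 <= b by rewrite /b -(powRr0 K); apply: ler_powR; [exact: ltW | lra].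
  rewrite le_eqVlt => /orP [/eqP e|//].
  have := powR_eq1 K gam; rewrite -/b -e eqxx /= => /esym /orP [/eqP K1e|/orP [K0'|/eqP g0]].
  - by move: K1; rewrite K1e ltxx.
  - by move: K0'; rewrite ltNge (ltW K0).
  - by move: gam0; rewrite g0 !ltxx.
have b0 : 0 < b by apply: lt_trans ltr01 b1.
have step : forall t, T1 < t -> sigma (b * t) <= c1 * sigma t.
  move=> t; rewrite gt_max => /andP [Tt Mt].
  have tT : T < t by have := ler_norm T; lra.
  have st : 0 < sigma t by apply: lt_le_trans ltr01 (HM _ (ltW Mt)).
  have := HT t tT; rewrite ler_pdivrMr // => H; apply: (le_trans H).
  by apply: ler_wpM2r; [exact: ltW | rewrite le_max lexx].
have iter : forall j t, T1 < t -> sigma (b ^+ j * t) <= c1 ^+ j * sigma t.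
  elim=> [|j IH] t Tt; first by rewrite !expr0 !mul1r.
  rewrite !exprS -mulrA; apply: (le_trans (step _ _)).
    apply: (lt_le_trans Tt); rewrite ler_peMl // ?exprn_ege1 ?ltW //.
    exact: lt_trans T10 Tt.
  rewrite -mulrA ler_pM2l //; exact: IH.
have [n hn] := @pow_beat _ c1 K c1 c10 c1K.
set K' := K ^+ n.
have K'0 : 0 < K' by rewrite exprn_gt0.
have K'1 : 1 < K'.
  apply: (le_lt_trans _ hn); rewrite -exprS; exact: exprn_ege1.
set q := Num.max (c1 ^+ n.+1) (K' / b).
have qK : q < K'.
  rewrite gt_max exprS hn /= ltr_pdivrMr // ltr_pMr //.
have q0 : 0 < q by rewrite lt_max exprn_gt0.
set Lam := K' `^ (gam + 1).
have LamE : Lam = b ^+ n * K'.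
  rewrite /Lam powRD; last by apply/implyP => _; rewrite gt_eqF.
  rewrite powRr1 ?ltW //; congr (_ * _).
  rewrite /K' -powR_mulrn ?ltW // -powRrM mulrC powRrM powR_mulrn //.
  by rewrite /b powR_ge0.
have Lam0 : 0 < Lam by rewrite LamE mulr_gt0 // exprn_gt0.
set T2 := Num.max T1 (2 * T1 * sigma (2 * T1)).
exists K'; split => //.
apply: (@le_lt_trans _ _ q%:E); last by rewrite lte_fin.
apply: (@limsup_le _ _ q T2) => t.
rewrite gt_max => /andP [T1t T2t].
have t0 : 0 < t by apply: lt_trans T10 T1t.
have ht0 : 0 < h t by exact: h_pos.
rewrite ler_pdivrMr //.
have key : forall u, 0 < u -> h (Lam * t) <= sigma (b ^+ n.+1 * u) + K' / b * (t / u).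
  move=> u u0.
  have bu0 : 0 < b ^+ n.+1 * u by rewrite mulr_gt0 // exprn_gt0.
  apply: (le_trans (@h_ub _ sigma s0 _ _ _ bu0)); first by rewrite ltW // mulr_gt0.
  rewrite lerD2l LamE exprS le_eqVlt; apply/orP; left; apply/eqP.
  field; rewrite !gt_eqF ?exprn_gt0 //.
suff H : h (Lam * t) / q <= h t by rewrite ler_pdivrMr // [_ * q]mulrC in H.
apply: (@h_glb _ sigma t _ (ltW t0)) => u u0.
rewrite ler_pdivrMr //.
have [uT|Tu] := leP u T1.
  apply: (le_trans (key (2 * T1) _)); first by rewrite mulr_gt0.
  have s2 := iter n.+1 (2 * T1) ltac:(rewrite ltr_pMl //; lra).
  have hs : 0 <= sigma u by apply: s0; exact: ltW.
  have tu : t / T1 <= t / u.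
    by apply: ler_wpM2l; [exact: ltW | rewrite lef_pV2 ?posrE].
  have sT2 : 2 * T1 * sigma (2 * T1) < t by apply: (le_lt_trans _ T2t); rewrite /T2 ?le_max ?lexx ?orbT.
  have e1 : sigma (2 * T1) <= t / (2 * T1).
    by rewrite ler_pdivlMr ?mulr_gt0 // mulrC; exact: ltW.
  have qc : c1 ^+ n.+1 <= q by rewrite le_max lexx.
  have qb : K' / b <= q by rewrite le_max lexx orbT.
  have e2 : t / (2 * T1) = (t / T1) / 2 by rewrite invfM mulrA mulrAC.
  have sg0 : 0 <= sigma (2 * T1) by apply: s0; rewrite mulr_ge0 // ltW.
  have tT0 : 0 <= t / T1 by rewrite divr_ge0 // ltW.
  rewrite e2 in e1 *.
  have := mulr_ge0 (ltW q0) hs.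
  nra.
apply: (le_trans (key u u0)).
have s2 := iter n.+1 u Tu.
have qc : c1 ^+ n.+1 <= q by rewrite le_max lexx.
have qb : K' / b <= q by rewrite le_max lexx orbT.
have hs : 0 <= sigma u by apply: s0; exact: ltW.
have tu0 : 0 <= t / u by rewrite divr_ge0 // ltW.
nra.
Qed.
End parta.

Theorem corollary2p26 (R : realType) (sigma : R -> R) :
  (forall t, 0 <= t -> 0 <= sigma t) ->
  (forall s t, 0 <= s -> s <= t -> sigma s <= sigma t) ->
  sigma x @[x --> +oo] --> +oo ->
  (0 < gamma_idx sigma)%E ->
  (gamma_idx sigma + 1 = gamma_idx (lstar (iota_fn sigma)))%E.
Proof.
move=> s0 smono sinf hpos.
have ex1 : exists gam : R, 0 < gam /\ P_prop sigma gam.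
  apply: contrapT => nex; move: hpos; rewrite /gamma_idx.
  by rewrite (asboolF nex) ltxx.
have ex2 : exists gam : R, 0 < gam /\ P_prop (lstar (iota_fn sigma)) gam.
  have [g [g0 Pg]] := ex1; exists (g + 1); split; first by rewrite addr_gt0.
  exact: (@parta _ sigma s0 smono sinf g g0 Pg).
move: hpos; rewrite /gamma_idx (asboolT ex1) (asboolT ex2).
set E1 := [set _%:E | _ in [set gam | 0 < gam /\ P_prop sigma gam]].
set E2 := [set _%:E | _ in _] => hpos.
have ub2 : forall g, 0 < g -> P_prop (lstar (iota_fn sigma)) g ->
    (g%:E <= ereal_sup E2)%E.
  by move=> g g0 Pg; apply: ereal_sup_ubound; exists g.
have ub1 : forall g, 0 < g -> P_prop sigma g -> (g%:E <= ereal_sup E1)%E.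
  by move=> g g0 Pg; apply: ereal_sup_ubound; exists g.
apply/eqP; rewrite eq_le; apply/andP; split.
- case E2e : (ereal_sup E2) => [r| |]; last 2 first.
  + exact: leey.
  + have [g [g0 Pg]] := ex2; have := ub2 _ g0 Pg; by rewrite E2e.
  have le1 : (ereal_sup E1 <= (r - 1)%:E)%E.
    apply: ge_ereal_sup => _ [g [g0 Pg] <-].
    have := ub2 (g + 1) (addr_gt0 g0 ltr01) (@parta _ sigma s0 smono sinf g g0 Pg).
    by rewrite E2e !lee_fin; lra.
  move: le1; case: (ereal_sup E1) => [s| |].
  + by rewrite !lee_fin; lra.
  + by rewrite leye_eq.
  + by move=> _; exact: leNye.
- apply: ge_ereal_sup => _ [d [d0 Pd] <-].
  move: hpos; case E1e : (ereal_sup E1) => [r| |] // hpos; last by rewrite leey.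
  rewrite lte_fin in hpos; rewrite lee_fin.
  have [d1|d1] := leP d 1; first lra.
  have := ub1 (d - 1) ltac:(lra) (@partb _ sigma s0 smono sinf d d1 Pd).
  by rewrite E1e lee_fin; lra.
Qed.
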